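(* Assume $\Lambda>0$. Let $\Omega_{\mathrm{adm}}$ be the set of initial data $V_0=(g^0,K^0,F^0,E^0,U^0,\theta^0,\rho_0,e_0)$ with $g^0$ symmetric positive definite, $K^0$ symmetric, $F^0$ antisymmetric, $E^0,U^0\in\mathbb{R}^3$, $\theta^0\in\mathbb{R}^4$, $\rho_0>0$, $e_0>0$, satisfying the constraints (C1)–(C4) at $t=0$ and $H(0)=g^{0,ij}K^0_{ij}<0$, and for $V_0\in\Omega_{\mathrm{adm}}$ let $S(V_0,\cdot):[0,\infty)\to\mathbb{R}^{31}$ denote the corresponding unique global $C^1$ solution of the evolution system (S) (with $\Theta^{00}\ge0$ along solutions). Then the Cauchy problem is well-posed in the sense of Hadamard: the map $V_0\mapsto S(V_0,\cdot)$ is continuous from $\Omega_{\mathrm{adm}}$ (with the topology induced from the finite-dimensional space of data) into $C([0,\infty);\mathbb{R}^{31})$ endowed with the topology of uniform convergence on compact subsets, i.e. generated by the seminorms $P_{[0,T]}(\varphi)=\sup_{t\in[0,T]}|\varphi(t)|_1$, $T>0$, where $|W|_1=\sum_i|W_i|$.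
   Context: Setting. $G$ is a three-dimensional connected Lie group of Bianchi type I–VIII, $(e_i)_{i=1,2,3}$ a left-invariant frame with structure constants $C^k_{ij}$ defined by $[e_i,e_j]=C^k_{ij}e_k$ (so $C^k_{ij}=-C^k_{ji}$ and the Jacobi identity holds). $\Lambda\in\mathbb{R}$ is a constant. Latin indices run over $1,2,3$; repeated indices are summed. Unknowns (functions of $t$): a symmetric positive definite matrix $g=(g_{ij})$ with inverse $(g^{ij})$; a symmetric matrix $K=(K_{ij})$; an antisymmetric matrix $F=(F_{ij})$; vectors $E=(E^i)$, $u=(u^i)$; $\Theta=(\Theta^{00},\Theta^{0i})$; a function $\rho>0$; a function $e\ge0$. The state vector $(g,K,F,E,u,\Theta,\rho,e)$ is regarded as an element of $\mathbb{R}^{31}$ via the entries of all components. Derived quantities: $u^0=\sqrt{1+g_{ij}u^iu^j}$, $u_i=g_{ij}u^j$; $H=g^{ij}K_{ij}$; $K^i_j=g^{ik}K_{kj}$, $K^{ij}=g^{ik}g^{jl}K_{kl}$; $F^{ij}=g^{ik}g^{jl}F_{kl}$; $\gamma^l_{ij}=\tfrac12 g^{lk}(-C^m_{jk}g_{im}+C^m_{ki}g_{jm}+C^m_{ij}g_{km})$; $R_{ij}=\gamma^l_{lm}\gamma^m_{ji}-\gamma^m_{jl}\gamma^l_{mi}-C^l_{mj}\gamma^m_{li}$, $R=g^{ij}R_{ij}$; $\tau_{00}=\tfrac12 g_{ij}E^iE^j+\tfrac14 g^{ik}g^{jl}F_{kl}F_{ij}$, $\tau_{0j}=-E^kF_{jk}$,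 $\tau_{ij}=(\tfrac12 g_{ij}g_{kl}-g_{ik}g_{jl})E^kE^l-\tfrac14 g_{ij}g^{km}g^{nl}F_{kl}F_{mn}+g^{kl}F_{ik}F_{jl}$; $\Theta_{00}=\Theta^{00}$, $\Theta_{0j}=-g_{jk}\Theta^{0k}$; $T_{00}=\tfrac43\rho(u^0)^2+\Theta_{00}$, $T_{0j}=-\tfrac43\rho u^0u_j+\Theta_{0j}$, $T_{ij}=\tfrac43\rho u_iu_j+\tfrac13\rho g_{ij}$; $\nabla$ is the Levi-Civita connection of the left-invariant metric $g$, so for left-invariant tensors $\nabla_kK_{ij}=-\gamma^l_{ki}K_{lj}-\gamma^l_{kj}K_{il}$ and $\nabla^iK_{ij}=g^{ik}\nabla_kK_{ij}$. Evolution system (S) (dot $=d/dt$): $\dot g_{ij}=-2K_{ij}$; $\dot K_{ij}=R_{ij}+HK_{ij}-2K^l_jK_{il}-8\pi(\tau_{ij}+T_{ij})+4\pi(-T_{00}+g^{lm}T_{lm})g_{ij}-\Lambda g_{ij}$; $\dot F_{ij}=C^k_{ij}g_{kl}E^l$; $\dot E^i=HE^i-C^j_{jk}E^k\frac{u^i}{u^0}-C^j_{jk}g^{kl}g^{im}F_{lm}-\tfrac12 C^i_{jk}g^{jl}g^{km}F_{lm}$; $\dot u^i=2K^i_ju^j-\gamma^i_{jk}\frac{u^ju^k}{u^0}+\frac{3}{4\rho u^0}C^j_{jk}E^kE^i-\frac{3}{4\rho(u^0)^2}C^j_{jk}E^kg^{il}F_{ml}u^m$; $\dot\Theta^{00}=H\Theta^{00}-C^i_{ij}\Theta^{0j}+\tfrac13\rho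 H+\rho u^0$; $\dot\Theta^{0i}=H\Theta^{0i}+2K^i_j\Theta^{0j}-\tfrac{\rho}{3}(C^k_{kj}g^{ij}+\gamma^i_{jk}g^{jk})+\rho u^i$; $\dot\rho=-\big(\frac{3}{4u^0}+K_{ij}\frac{u^iu^j}{(u^0)^2}-H+C^i_{ij}\frac{u^j}{u^0}\big)\rho-\tfrac34 g_{il}C^j_{jk}E^kE^l\frac{u^i}{(u^0)^3}$; $\dot e=-\big(K_{ij}\frac{u^iu^j}{(u^0)^2}+C^i_{ik}\frac{u^k}{u^0}-H\big)e+\tfrac34 g_{ij}\frac{u^iE^j}{(u^0)^2}\frac{e^2}{\rho}$. Constraints: (C1) $R-K_{ij}K^{ij}+H^2=16\pi(\tau_{00}+T_{00})+2\Lambda$; (C2) $\nabla^iK_{ij}=-8\pi(\tau_{0j}+T_{0j})$; (C3) $C^l_{ij}F_{kl}+C^l_{jk}F_{il}+C^l_{ki}F_{jl}=0$; (C4) $C^i_{ik}E^k+eu^0=0$. Model assumption: $\Theta^{00}\ge0$. For Bianchi types I–VIII the scalar curvature satisfies $R\le0$. For $\Lambda>0$ and admissible data a unique global solution exists on $[0,\infty)$. *)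

(* Defs.v *)
From Stdlib Require Import Reals Lra Lia.
Open Scope R_scope.

(* Indices 1,2,3 of the paper are encoded as 0,1,2 (nat). *)
Definition sum3 (f : nat -> R) : R := f 0%nat + f 1%nat + f 2%nat.

(* Structure constants: Cs k i j = C^k_{ij}, i.e. [e_i,e_j] = C^k_{ij} e_k. *)
Definition StructConst := nat -> nat -> nat -> R.

Definition sc_antisym (C : StructConst) : Prop :=
  forall k i j, (k < 3)%nat -> (i < 3)%nat -> (j < 3)%nat -> C k i j = - C k j i.

Definition sc_jacobi (C : StructConst) : Prop :=
  forall i j k m, (i < 3)%nat -> (j < 3)%nat -> (k < 3)%nat -> (m < 3)%nat ->
    sum3 (fun l => C l i j * C m l k + C l j k * C m l i + C l k i * C m l j) = 0.

Definition levi (i j k : nat) : R :=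
  match i, j, k with
  | O, S O, S (S O) => 1 | S O, S (S O), O => 1 | S (S O), O, S O => 1
  | O, S (S O), S O => -1 | S (S O), S O, O => -1 | S O, O, S (S O) => -1
  | _, _, _ => 0
  end.

(* Bianchi type IX: in some basis e'_i = A_i^a e_a the structure constants are
   C'^k_{ij} = eps_{ijk} (Lie algebra so(3) ~ su(2)). Here B = A^{-1}
   (e_c = B_c^k e'_k), and C'^k_{ij} = A_i^a A_j^b C^c_{ab} B_c^k. *)
Definition bianchi_IX (C : StructConst) : Prop :=
  exists A B : nat -> nat -> R,
    (forall c a, (c < 3)%nat -> (a < 3)%nat ->
        sum3 (fun k => B c k * A k a) = if Nat.eqb c a then 1 else 0) /\
    (forall i j k, (i < 3)%nat -> (j < 3)%nat -> (k < 3)%nat ->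
        sum3 (fun a => sum3 (fun b => sum3 (fun c => A i a * A j b * C c a b * B c k)))
        = levi i j k).

(* Bianchi types I--VIII: every three-dimensional real Lie algebra is of Bianchi
   type I--IX; types I--VIII are exactly those not of type IX. *)
Definition bianchi_I_to_VIII (C : StructConst) : Prop :=
  sc_antisym C /\ sc_jacobi C /\ ~ bianchi_IX C.

(* The entries of all components are stored as a map
   nat -> R, using coordinates 0..38:
     g_{ij} : 3i+j,  K_{ij} : 9+3i+j,  F_{ij} : 18+3i+j,  E^i : 27+i,
     u^i : 30+i,  Theta^{00} : 33,  Theta^{0i} : 34+i,  rho : 37,  e : 38.
   (Full 3x3 matrices are stored.) *)
Definition st := nat -> R.
Definition ncoord : nat := 39.

Definition sg   (V : st) (i j : nat) : R := V (3*i+j)%nat.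
Definition sK   (V : st) (i j : nat) : R := V (9+3*i+j)%nat.
Definition sF   (V : st) (i j : nat) : R := V (18+3*i+j)%nat.
Definition sE   (V : st) (i : nat) : R := V (27+i)%nat.
Definition su   (V : st) (i : nat) : R := V (30+i)%nat.
Definition sT00 (V : st) : R := V 33%nat.
Definition sT0  (V : st) (i : nat) : R := V (34+i)%nat.
Definition srho (V : st) : R := V 37%nat.
Definition se   (V : st) : R := V 38%nat.

Definition norm1 (W : st) : R := sum_f_R0 (fun k => Rabs (W k)) (ncoord - 1).
Definition dist1 (W V : st) : R := norm1 (fun k => W k - V k).

Definition cof (g : nat -> nat -> R) (i j : nat) : R :=
  let i1 := ((i+1) mod 3)%nat in let i2 := ((i+2) mod 3)%nat in
  let j1 := ((j+1) mod 3)%nat in let j2 := ((j+2) mod 3)%nat in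
  g i1 j1 * g i2 j2 - g i1 j2 * g i2 j1.
Definition det3 (g : nat -> nat -> R) : R := sum3 (fun j => g 0%nat j * cof g 0%nat j).
Definition inv3 (g : nat -> nat -> R) (i j : nat) : R := cof g j i / det3 g.

Definition sym3 (M : nat -> nat -> R) : Prop :=
  forall i j, (i < 3)%nat -> (j < 3)%nat -> M i j = M j i.
Definition antisym3 (M : nat -> nat -> R) : Prop :=
  forall i j, (i < 3)%nat -> (j < 3)%nat -> M i j = - M j i.
Definition posdef3 (M : nat -> nat -> R) : Prop :=
  sym3 M /\
  forall x : nat -> R, (x 0%nat <> 0 \/ x 1%nat <> 0 \/ x 2%nat <> 0) ->
    0 < sum3 (fun i => sum3 (fun j => M i j * x i * x j)).

Section Derived.
Variable (C : StructConst) (Lam : R) (V : st).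

Definition g_ (i j : nat) := sg V i j.
Definition gi (i j : nat) := inv3 (sg V) i j.
Definition K_ (i j : nat) := sK V i j.
Definition F_ (i j : nat) := sF V i j.
Definition E_ (i : nat) := sE V i.
Definition u_ (i : nat) := su V i.
Definition rho_ := srho V.
Definition e_ := se V.

Definition u0 : R := sqrt (1 + sum3 (fun i => sum3 (fun j => g_ i j * u_ i * u_ j))).
Definition ulow (i : nat) : R := sum3 (fun j => g_ i j * u_ j).
Definition Hm : R := sum3 (fun i => sum3 (fun j => gi i j * K_ i j)).
Definition Kud (i j : nat) : R := sum3 (fun k => gi i k * K_ k j).
Definition Kuu (i j : nat) : R :=
  sum3 (fun k => sum3 (fun l => gi i k * gi j l * K_ k l)).
Definition gam (l i j : nat) : R :=
  / 2 * sum3 (fun k => gi l k *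
     (- sum3 (fun m => C m j k * g_ i m) + sum3 (fun m => C m k i * g_ j m)
      + sum3 (fun m => C m i j * g_ k m))).
Definition Ric (i j : nat) : R :=
  sum3 (fun l => sum3 (fun m => gam l l m * gam m j i))
  - sum3 (fun l => sum3 (fun m => gam m j l * gam l m i))
  - sum3 (fun l => sum3 (fun m => C l m j * gam m l i)).
Definition Rsc : R := sum3 (fun i => sum3 (fun j => gi i j * Ric i j)).

Definition tau00 : R :=
  / 2 * sum3 (fun i => sum3 (fun j => g_ i j * E_ i * E_ j))
  + / 4 * sum3 (fun i => sum3 (fun j => sum3 (fun k => sum3 (fun l =>
            gi i k * gi j l * F_ k l * F_ i j)))).
Definition tau0 (j : nat) : R := - sum3 (fun k => E_ k * F_ j k).
Definition tau (i j : nat) : R :=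
  sum3 (fun k => sum3 (fun l => (/ 2 * g_ i j * g_ k l - g_ i k * g_ j l) * E_ k * E_ l))
  - / 4 * g_ i j * sum3 (fun k => sum3 (fun l => sum3 (fun m => sum3 (fun n =>
            gi k m * gi n l * F_ k l * F_ m n))))
  + sum3 (fun k => sum3 (fun l => gi k l * F_ i k * F_ j l)).

Definition Th00low : R := sT00 V.
Definition Th0low (j : nat) : R := - sum3 (fun k => g_ j k * sT0 V k).
Definition T00 : R := 4 / 3 * rho_ * u0 ^ 2 + Th00low.
Definition T0 (j : nat) : R := - (4 / 3) * rho_ * u0 * ulow j + Th0low j.
Definition Tij (i j : nat) : R := 4 / 3 * rho_ * ulow i * ulow j + / 3 * rho_ * g_ i j.

Definition dg (i j : nat) : R := - 2 * K_ i j.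
Definition dK (i j : nat) : R :=
  Ric i j + Hm * K_ i j - 2 * sum3 (fun l => Kud l j * K_ i l)
  - 8 * PI * (tau i j + Tij i j)
  + 4 * PI * (- T00 + sum3 (fun l => sum3 (fun m => gi l m * Tij l m))) * g_ i j
  - Lam * g_ i j.
Definition dF (i j : nat) : R := sum3 (fun k => sum3 (fun l => C k i j * g_ k l * E_ l)).
Definition dE (i : nat) : R :=
  Hm * E_ i
  - sum3 (fun j => sum3 (fun k => C j j k * E_ k)) * u_ i / u0
  - sum3 (fun j => sum3 (fun k => sum3 (fun l => sum3 (fun m =>
        C j j k * gi k l * gi i m * F_ l m))))
  - / 2 * sum3 (fun j => sum3 (fun k => sum3 (fun l => sum3 (fun m =>
        C i j k * gi j l * gi k m * F_ l m)))).
Definition du (i : nat) : R :=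
  2 * sum3 (fun j => Kud i j * u_ j)
  - sum3 (fun j => sum3 (fun k => gam i j k * u_ j * u_ k)) / u0
  + 3 / (4 * rho_ * u0) * sum3 (fun j => sum3 (fun k => C j j k * E_ k)) * E_ i
  - 3 / (4 * rho_ * u0 ^ 2) *
      sum3 (fun j => sum3 (fun k => sum3 (fun l => sum3 (fun m =>
        C j j k * E_ k * gi i l * F_ m l * u_ m)))).
Definition dT00 : R :=
  Hm * sT00 V - sum3 (fun i => sum3 (fun j => C i i j * sT0 V j))
  + / 3 * rho_ * Hm + rho_ * u0.
Definition dT0 (i : nat) : R :=
  Hm * sT0 V i + 2 * sum3 (fun j => Kud i j * sT0 V j)
  - rho_ / 3 * (sum3 (fun j => sum3 (fun k => C k k j * gi i j))
                + sum3 (fun j => sum3 (fun k => gam i j k * gi j k)))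
  + rho_ * u_ i.
Definition drho : R :=
  - (3 / (4 * u0) + sum3 (fun i => sum3 (fun j => K_ i j * u_ i * u_ j)) / u0 ^ 2 - Hm
     + sum3 (fun i => sum3 (fun j => C i i j * u_ j)) / u0) * rho_
  - 3 / 4 * sum3 (fun i => sum3 (fun l => sum3 (fun j => sum3 (fun k =>
        g_ i l * C j j k * E_ k * E_ l * u_ i)))) / u0 ^ 3.
Definition de : R :=
  - (sum3 (fun i => sum3 (fun j => K_ i j * u_ i * u_ j)) / u0 ^ 2
     + sum3 (fun i => sum3 (fun k => C i i k * u_ k)) / u0 - Hm) * e_
  + 3 / 4 * sum3 (fun i => sum3 (fun j => g_ i j * u_ i * E_ j)) / u0 ^ 2 * (e_ ^ 2 / rho_).

Definition constr_C1 : Prop :=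
  Rsc - sum3 (fun i => sum3 (fun j => K_ i j * Kuu i j)) + Hm ^ 2
  = 16 * PI * (tau00 + T00) + 2 * Lam.
Definition divK (j : nat) : R :=
  sum3 (fun i => sum3 (fun k => gi i k *
    (- sum3 (fun l => gam l k i * K_ l j) - sum3 (fun l => gam l k j * K_ i l)))).
Definition constr_C2 : Prop :=
  forall j, (j < 3)%nat -> divK j = - 8 * PI * (tau0 j + T0 j).
Definition constr_C3 : Prop :=
  forall i j k, (i < 3)%nat -> (j < 3)%nat -> (k < 3)%nat ->
    sum3 (fun l => C l i j * F_ k l + C l j k * F_ i l + C l k i * F_ j l) = 0.
Definition constr_C4 : Prop :=
  sum3 (fun i => sum3 (fun k => C i i k * E_ k)) + e_ * u0 = 0.

End Derived.

Definition vf (C : StructConst) (Lam : R) (V : st) (k : nat) : R :=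
  if (k <? 9)%nat then dg V (k / 3) (k mod 3)
  else if (k <? 18)%nat then dK C Lam V ((k - 9) / 3) ((k - 9) mod 3)
  else if (k <? 27)%nat then dF C V ((k - 18) / 3) ((k - 18) mod 3)
  else if (k <? 30)%nat then dE C V (k - 27)
  else if (k <? 33)%nat then du C V (k - 30)
  else if (k =? 33)%nat then dT00 C V
  else if (k <? 37)%nat then dT0 C V (k - 34)
  else if (k =? 37)%nat then drho C V
  else if (k =? 38)%nat then de C V
  else 0.

Definition admissible (C : StructConst) (Lam : R) (V : st) : Prop :=
  posdef3 (sg V) /\ sym3 (sK V) /\ antisym3 (sF V) /\
  0 < srho V /\ 0 < se V /\
  constr_C1 C Lam V /\ constr_C2 C V /\ constr_C3 C V /\ constr_C4 C V /\
  Hm V < 0.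

(* phi : [0,oo) -> R^n is a global C^1 solution of (S) with phi(0) = V0
   (continuous on [0,oo), differentiable on (0,oo) with phi' = vf(phi),
   staying in the domain g posdef, rho > 0 where (S) is defined). *)
Definition global_solution (C : StructConst) (Lam : R) (phi : R -> st) (V0 : st) : Prop :=
  (forall k, (k < ncoord)%nat -> phi 0 k = V0 k) /\
  (forall t, 0 <= t -> posdef3 (sg (phi t)) /\ 0 < srho (phi t)) /\
  (forall k t, (k < ncoord)%nat -> 0 <= t ->
     forall eps, 0 < eps -> exists delta, 0 < delta /\
       forall s, 0 <= s -> Rabs (s - t) < delta -> Rabs (phi s k - phi t k) < eps) /\
  (forall k t, (k < ncoord)%nat -> 0 < t ->
     derivable_pt_lim (fun s => phi s k) t (vf C Lam (phi t) k)).

(* Main.v *)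
Require Import Defs.
From Stdlib Require Import Reals Lra Lia Classical.
From Coquelicot Require Coquelicot.
Open Scope R_scope.


Lemma sum_nonneg (f : nat -> R) n : (forall k, (k <= n)%nat -> 0 <= f k) -> 0 <= sum_f_R0 f n.
Proof. induction n; intros H; simpl. apply H; lia. pose proof (H (S n) ltac:(lia)). pose proof (IHn (fun k Hk => H k ltac:(lia))). lra. Qed.

Lemma sum_term_le (f : nat -> R) n k : (forall k, (k <= n)%nat -> 0 <= f k) -> (k <= n)%nat -> f k <= sum_f_R0 f n.
Proof. induction n; intros H Hk; simpl.
 - replace k with 0%nat by lia; lra.
 - destruct (Nat.eq_dec k (S n)). subst. pose proof (sum_nonneg f n (fun j Hj => H j ltac:(lia))); lra.
   pose proof (IHn (fun j Hj => H j ltac:(lia)) ltac:(lia)). pose proof (H (S n) ltac:(lia)); lra. Qed.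

Lemma sum_le (f g : nat -> R) n : (forall k, (k <= n)%nat -> f k <= g k) -> sum_f_R0 f n <= sum_f_R0 g n.
Proof. induction n; intros H; simpl. apply H; lia. pose proof (H (S n) ltac:(lia)). pose proof (IHn (fun k Hk => H k ltac:(lia))). lra. Qed.

Lemma sum_ext (f g : nat -> R) n : (forall k, (k <= n)%nat -> f k = g k) -> sum_f_R0 f n = sum_f_R0 g n.
Proof. induction n; intros H; simpl. apply H; lia. rewrite (H (S n) ltac:(lia)), (IHn (fun k Hk => H k ltac:(lia))). lra. Qed.

Lemma sum_plus (f g : nat -> R) n : sum_f_R0 (fun k => f k + g k) n = sum_f_R0 f n + sum_f_R0 g n.
Proof. induction n; simpl; lra. Qed.

Lemma sum_scal (f : nat -> R) c n : sum_f_R0 (fun k => c * f k) n = c * sum_f_R0 f n.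
Proof. induction n; simpl; lra. Qed.

Lemma dist1_nonneg W V : 0 <= dist1 W V.
Proof. unfold dist1, norm1. apply sum_nonneg. intros; apply Rabs_pos. Qed.

Lemma sum_zero n : sum_f_R0 (fun _ => 0) n = 0.
Proof. induction n; simpl; lra. Qed.

Lemma dist1_refl W : dist1 W W = 0.
Proof. unfold dist1, norm1. rewrite (sum_ext _ (fun _ => 0)). apply sum_zero.
 intros; replace (W k - W k) with 0 by ring; apply Rabs_R0. Qed.

Lemma dist1_sym W V : dist1 W V = dist1 V W.
Proof. unfold dist1, norm1. apply sum_ext. intros; rewrite Rabs_minus_sym; reflexivity. Qed.

Lemma dist1_tri W U V : dist1 W V <= dist1 W U + dist1 U V.
Proof. unfold dist1, norm1. rewrite <- sum_plus. apply sum_le. intros.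
 replace (W k - V k) with ((W k - U k) + (U k - V k)) by ring. apply Rabs_triang. Qed.

Lemma dist1_coord W V k : (k < ncoord)%nat -> Rabs (W k - V k) <= dist1 W V.
Proof. intros Hk. unfold dist1, norm1. apply (sum_term_le (fun k => Rabs (W k - V k))).
 intros; apply Rabs_pos. unfold ncoord in *; simpl; lia. Qed.

Lemma dist1_ext W W' V V' : (forall k, (k < ncoord)%nat -> W k = W' k /\ V k = V' k) -> dist1 W V = dist1 W' V'.
Proof. intros H. unfold dist1, norm1. apply sum_ext. intros k Hk. destruct (H k ltac:(unfold ncoord; simpl in *; lia)) as [-> ->]. reflexivity. Qed.

Definition LL (f : st -> R) (V : st) : Prop :=
  exists r L, 0 < r /\ 0 <= L /\ forall W W', dist1 W V < r -> dist1 W' V < r ->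
    Rabs (f W - f W') <= L * dist1 W W'.

Lemma LL_bound f V : LL f V -> exists r L, 0 < r /\ 0 <= L /\ forall W, dist1 W V < r -> Rabs (f W - f V) <= L * r.
Proof. intros (r & L & Hr & HL & H). exists r, L; repeat split; auto. intros W HW.
 assert (HV: dist1 V V < r) by (rewrite dist1_refl; lra).
 pose proof (H W V HW HV). pose proof (dist1_nonneg W V). rewrite (dist1_sym W V) in *.
 eapply Rle_trans; [exact H0|]. apply Rmult_le_compat_l; lra. Qed.

Lemma LL_const c V : LL (fun _ => c) V.
Proof. exists 1, 0. repeat split; try lra. intros. replace (c - c) with 0 by ring. rewrite Rabs_R0. lra. Qed.

Lemma LL_coord k V : (k < ncoord)%nat -> LL (fun W => W k) V.
Proof. intros Hk. exists 1, 1. repeat split; try lra. intros. rewrite Rmult_1_l. apply dist1_coord; auto. Qed.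

Lemma LL_shrink f V r : LL f V -> 0 < r -> exists r' L, 0 < r' /\ r' <= r /\ 0 <= L /\ forall W W', dist1 W V < r' -> dist1 W' V < r' ->
    Rabs (f W - f W') <= L * dist1 W W'.
Proof. intros (r0 & L & Hr & HL & H) Hr1. exists (Rmin r r0), L. repeat split; auto.
 apply Rmin_pos; auto. apply Rmin_l. intros W W' H1 H2. apply H.
 pose proof (Rmin_r r r0); lra. pose proof (Rmin_r r r0); lra. Qed.

Lemma LL_plus f g V : LL f V -> LL g V -> LL (fun W => f W + g W) V.
Proof. intros Hf (rg & Lg & Hrg & HLg & Hg). destruct (LL_shrink f V rg Hf Hrg) as (r & Lf & Hr & Hrr & HLf & Hf').
 exists r, (Lf + Lg). repeat split; try lra. intros W W' H1 H2.
 pose proof (Hf' W W' H1 H2). pose proof (Hg W W' ltac:(lra) ltac:(lra)).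
 replace (f W + g W - (f W' + g W')) with ((f W - f W') + (g W - g W')) by ring.
 eapply Rle_trans. apply Rabs_triang. lra. Qed.

Lemma LL_opp f V : LL f V -> LL (fun W => - f W) V.
Proof. intros (r & L & Hr & HL & H). exists r, L. repeat split; auto. intros.
 replace (- f W - - f W') with (- (f W - f W')) by ring. rewrite Rabs_Ropp. auto. Qed.

Lemma LL_minus f g V : LL f V -> LL g V -> LL (fun W => f W - g W) V.
Proof. intros. unfold Rminus. apply LL_plus; auto. apply LL_opp; auto. Qed.

Lemma LL_near f V : LL f V -> exists r L, 0 < r /\ 0 <= L /\ (forall W W', dist1 W V < r -> dist1 W' V < r ->
    Rabs (f W - f W') <= L * dist1 W W') /\ forall W, dist1 W V < r -> Rabs (f W - f V) <= L * r.
Proof. intros (r & L & Hr & HL & H). exists r, L. repeat split; auto. intros W HW.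
 assert (HV: dist1 V V < r) by (rewrite dist1_refl; lra).
 pose proof (H W V HW HV). pose proof (dist1_nonneg W V). rewrite (dist1_sym W V) in *.
 eapply Rle_trans; [exact H0|]. apply Rmult_le_compat_l; lra. Qed.

Lemma LL_mult f g V : LL f V -> LL g V -> LL (fun W => f W * g W) V.
Proof. intros Hf Hg. destruct (LL_near f V Hf) as (rf & Lf & Hrf & HLf & Hf' & Bf).
 destruct (LL_near g V Hg) as (rg & Lg & Hrg & HLg & Hg' & Bg).
 set (r := Rmin rf rg).
 assert (Hr1 : r <= rf /\ r <= rg) by (split; [apply Rmin_l|apply Rmin_r]).
 assert (Hr : 0 < r) by (apply Rmin_pos; auto).
 set (Mf := Rabs (f V) + Lf * rf). set (Mg := Rabs (g V) + Lg * rg).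
 assert (0 <= Mf /\ 0 <= Mg). { unfold Mf, Mg. pose proof (Rabs_pos (f V)); pose proof (Rabs_pos (g V)). split; nra. }
 exists r, (Mf * Lg + Mg * Lf). split; auto. split. nra.
 intros W W' H1 H2.
 assert (A1 : Rabs (f W) <= Mf). { pose proof (Bf W ltac:(lra)). unfold Mf.
   replace (f W) with ((f W - f V) + f V) by ring. eapply Rle_trans. apply Rabs_triang. lra. }
 assert (A2 : Rabs (g W') <= Mg). { pose proof (Bg W' ltac:(lra)). unfold Mg.
   replace (g W') with ((g W' - g V) + g V) by ring. eapply Rle_trans. apply Rabs_triang. lra. }
 pose proof (Hf' W W' ltac:(lra) ltac:(lra)). pose proof (Hg' W W' ltac:(lra) ltac:(lra)).
 replace (f W * g W - f W' * g W') with (f W * (g W - g W') + g W' * (f W - f W')) by ring.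
 eapply Rle_trans. apply Rabs_triang. rewrite !Rabs_mult.
 pose proof (Rabs_pos (f W)); pose proof (Rabs_pos (g W')); pose proof (Rabs_pos (g W - g W')); pose proof (Rabs_pos (f W - f W')).
 pose proof (dist1_nonneg W W').
 assert (Rabs (f W) * Rabs (g W - g W') <= Mf * (Lg * dist1 W W')) by (apply Rmult_le_compat; auto).
 assert (Rabs (g W') * Rabs (f W - f W') <= Mg * (Lf * dist1 W W')) by (apply Rmult_le_compat; auto).
 nra. Qed.

Lemma LL_lower f V : LL f V -> f V <> 0 -> exists r L, 0 < r /\ 0 <= L /\ (forall W W', dist1 W V < r -> dist1 W' V < r ->
    Rabs (f W - f W') <= L * dist1 W W') /\ forall W, dist1 W V < r -> Rabs (f V) / 2 <= Rabs (f W) /\ Rabs (f W - f V) <= Rabs (f V) / 2.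
Proof. intros Hf Hne. destruct (LL_near f V Hf) as (r0 & L & Hr0 & HL & H & B).
 set (a := Rabs (f V)). assert (Ha : 0 < a) by (apply Rabs_pos_lt; auto).
 set (r := Rmin r0 (a / (2 * (L + 1)))).
 assert (Hr1 : r <= r0 /\ r <= a / (2 * (L + 1))) by (split; [apply Rmin_l|apply Rmin_r]).
 assert (Hr : 0 < r). { unfold r. apply Rmin_pos; auto. apply Rdiv_lt_0_compat; lra. }
 exists r, L. split; [auto|split; [auto|split]]. intros; apply H; lra.
 intros W HW; assert (HW2 : dist1 V W < r) by (rewrite dist1_sym; exact HW); split.
 -  assert (HV: dist1 V V < r0) by (rewrite dist1_refl; lra).
   pose proof (H W V ltac:(lra) HV). rewrite dist1_sym in H0.
   assert (L * dist1 V W <= L * (a / (2 * (L+1)))). { apply Rmult_le_compat_l; auto. lra. }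
   assert (L * (a / (2 * (L+1))) <= a / 2). { unfold Rdiv. rewrite Rinv_mult.
     replace (L * (a * (/2 * / (L+1)))) with ((a/2) * (L / (L+1))) by (unfold Rdiv; ring).
     assert (L/(L+1) <= 1) by (apply Rmult_le_reg_r with (L+1); [lra| unfold Rdiv; rewrite Rmult_assoc, Rinv_l; lra]).
     assert (0 <= L/(L+1)) by (unfold Rdiv; apply Rmult_le_pos; [lra|apply Rlt_le, Rinv_0_lt_compat; lra]). nra. }
   pose proof (Rabs_triang_inv (f V) (f V - f W)) as H4. replace (f V - (f V - f W)) with (f W) in H4 by ring.
   rewrite Rabs_minus_sym in H4. fold a in H4. lra.
 - assert (HV: dist1 V V < r0) by (rewrite dist1_refl; lra).
   pose proof (H W V ltac:(lra) HV). rewrite dist1_sym in H0.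
   assert (L * dist1 V W <= L * (a / (2 * (L+1)))). { apply Rmult_le_compat_l; auto. lra. }
   assert (L * (a / (2 * (L+1))) <= a / 2). { unfold Rdiv. rewrite Rinv_mult.
     replace (L * (a * (/2 * / (L+1)))) with ((a/2) * (L / (L+1))) by (unfold Rdiv; ring).
     assert (L/(L+1) <= 1) by (apply Rmult_le_reg_r with (L+1); [lra| unfold Rdiv; rewrite Rmult_assoc, Rinv_l; lra]).
     assert (0 <= L/(L+1)) by (unfold Rdiv; apply Rmult_le_pos; [lra|apply Rlt_le, Rinv_0_lt_compat; lra]). nra. }
   fold a. lra.
Qed.

Lemma LL_inv f V : LL f V -> f V <> 0 -> LL (fun W => / f W) V.
Proof. intros Hf Hne. destruct (LL_lower f V Hf Hne) as (r & L & Hr & HL & H & Lo).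
 set (a := Rabs (f V)). assert (Ha : 0 < a) by (apply Rabs_pos_lt; auto).
 exists r, (L * (4 / (a * a))). split; auto. split. apply Rmult_le_pos; auto.
 unfold Rdiv; apply Rmult_le_pos; [lra|apply Rlt_le, Rinv_0_lt_compat; nra].
 intros W W' H1 H2. destruct (Lo W H1) as [A1 _]. destruct (Lo W' H2) as [A2 _]. fold a in A1, A2.
 assert (fW : f W <> 0). { intro E. rewrite E, Rabs_R0 in A1. lra. }
 assert (fW' : f W' <> 0). { intro E. rewrite E, Rabs_R0 in A2. lra. }
 replace (/ f W - / f W') with ((f W' - f W) * / (f W * f W')) by (field; auto).
 rewrite Rabs_mult, Rabs_inv, Rabs_mult, Rabs_minus_sym.
 pose proof (H W W' H1 H2).
 assert (a / 2 * (a / 2) <= Rabs (f W) * Rabs (f W')) by (apply Rmult_le_compat; lra).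
 assert (/ (Rabs (f W) * Rabs (f W')) <= 4 / (a * a)).
 { replace (4 / (a * a)) with (/ (a / 2 * (a / 2))) by (field; lra).
   apply Rinv_le_contravar; auto. nra. }
 pose proof (Rabs_pos (f W - f W')).
 assert (0 <= / (Rabs (f W) * Rabs (f W'))). { apply Rlt_le, Rinv_0_lt_compat. nra. }
 replace (L * (4 / (a * a)) * dist1 W W') with ((L * dist1 W W') * (4 / (a * a))) by ring.
 apply Rmult_le_compat; auto. Qed.

Lemma LL_div f g V : LL f V -> LL g V -> g V <> 0 -> LL (fun W => f W / g W) V.
Proof. intros. unfold Rdiv. apply LL_mult; auto. apply LL_inv; auto. Qed.

Lemma LL_pow f n V : LL f V -> LL (fun W => f W ^ n) V.
Proof. intros H. induction n; simpl. apply LL_const. apply LL_mult; auto. Qed.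

Lemma LL_sqrt f V : LL f V -> 0 < f V -> LL (fun W => sqrt (f W)) V.
Proof. intros Hf Hp. destruct (LL_lower f V Hf ltac:(lra)) as (r & L & Hr & HL & H & Lo).
 rewrite Rabs_pos_eq in Lo by lra.
 set (a := f V). assert (Hpa : 0 < a) by (unfold a; lra).
 assert (Pos : forall W, dist1 W V < r -> a / 2 <= f W).
 { intros W HW. destruct (Lo W HW) as [_ B]. fold a in B. unfold Rabs in B; destruct (Rcase_abs _) in B; lra. }
 assert (Hsa : 0 < sqrt (a / 2)). { apply sqrt_lt_R0. idtac. unfold a. lra. }
 exists r, (L / sqrt (a / 2)). split; auto. split. unfold Rdiv; apply Rmult_le_pos; [lra|apply Rlt_le, Rinv_0_lt_compat; lra].
 intros W W' H1 H2. pose proof (Pos W H1). pose proof (Pos W' H2).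
 assert (sqrt (a/2) <= sqrt (f W)) by (apply sqrt_le_1; lra).
 assert (sqrt (a/2) <= sqrt (f W')) by (apply sqrt_le_1; lra).
 assert (E : sqrt (f W) - sqrt (f W') = (f W - f W') / (sqrt (f W) + sqrt (f W'))).
 { apply Rmult_eq_reg_r with (sqrt (f W) + sqrt (f W')). 2: lra.
   unfold Rdiv. rewrite Rmult_assoc, Rinv_l by lra. rewrite Rmult_1_r.
   replace ((sqrt (f W) - sqrt (f W')) * (sqrt (f W) + sqrt (f W'))) with (sqrt (f W) * sqrt (f W) - sqrt (f W') * sqrt (f W')) by ring.
   rewrite !sqrt_sqrt by lra. ring. }
 rewrite E. unfold Rdiv. rewrite Rabs_mult. rewrite Rabs_inv. rewrite (Rabs_pos_eq (_ + _)) by lra.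
 pose proof (H W W' H1 H2). pose proof (Rabs_pos (f W - f W')).
 assert (/ (sqrt (f W) + sqrt (f W')) <= / sqrt (a/2)). { apply Rinv_le_contravar; lra. }
 assert (0 <= / (sqrt (f W) + sqrt (f W'))). { apply Rlt_le, Rinv_0_lt_compat; lra. }
 apply Rle_trans with ((L * dist1 W W') * / sqrt (a/2)). apply Rmult_le_compat; auto. right; unfold Rdiv; ring. Qed.


Lemma det_pos M : posdef3 M -> 0 < det3 M.
Proof. intros [Hs Hp].
 assert (s01 : M 1%nat 0%nat = M 0%nat 1%nat) by (apply Hs; lia).
 set (x0 := fun n : nat => match n with 0%nat => 1 | _ => 0 end).
 pose proof (Hp x0 ltac:(left; simpl; lra)) as P0. unfold sum3, x0 in P0; simpl in P0.
 set (x1 := fun n : nat => match n with 0%nat => M 0%nat 1%nat | 1%nat => - M 0%nat 0%nat | _ => 0 end).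
 assert (P1 : 0 < M 0%nat 0%nat * (M 0%nat 0%nat * M 1%nat 1%nat - M 0%nat 1%nat * M 1%nat 0%nat)).
 { pose proof (Hp x1 ltac:(right; left; simpl; lra)) as P. unfold sum3, x1 in P; simpl in P.
   rewrite s01 in *. nra. }
 assert (c22 : 0 < M 0%nat 0%nat * M 1%nat 1%nat - M 0%nat 1%nat * M 1%nat 0%nat).
 { apply (Rmult_lt_reg_l (M 0%nat 0%nat)); nra. }
 set (x2 := fun n : nat => cof M 2%nat n).
 assert (Hx : x2 2%nat <> 0). { unfold x2, cof; simpl. lra. }
 pose proof (Hp x2 ltac:(right; right; exact Hx)) as P.
 assert (E : sum3 (fun i => sum3 (fun j => M i j * x2 i * x2 j)) = x2 2%nat * det3 M).
 { unfold x2, det3, cof, sum3; simpl. ring. }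
 rewrite E in P. unfold x2, cof in P; simpl in P. apply (Rmult_lt_reg_l (M 0%nat 0%nat * M 1%nat 1%nat - M 0%nat 1%nat * M 1%nat 0%nat)); lra.
Qed.

Definition Dom (V : st) : Prop := posdef3 (sg V) /\ 0 < srho V.

Lemma u0arg_pos V : posdef3 (sg V) ->
  0 < 1 + sum3 (fun i => sum3 (fun j => g_ V i j * u_ V i * u_ V j)).
Proof. intros [Hs Hp]. unfold g_, u_.
 destruct (Req_dec (su V 0%nat) 0) as [e0|n0]; [destruct (Req_dec (su V 1%nat) 0) as [e1|n1]; [destruct (Req_dec (su V 2%nat) 0) as [e2|n2]|]|].
 - unfold sum3. rewrite e0, e1, e2. lra.
 - pose proof (Hp (su V) ltac:(right; right; auto)). lra.
 - pose proof (Hp (su V) ltac:(right; left; auto)). lra.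
 - pose proof (Hp (su V) ltac:(left; auto)). lra.
Qed.

Lemma u0_pos V : posdef3 (sg V) -> 0 < u0 V.
Proof. intros H. unfold u0. apply sqrt_lt_R0. apply u0arg_pos; auto. Qed.

Section Atoms.
Variable (C : StructConst) (Lam : R) (V : st).
Hypothesis HD : Dom V.

Lemma LL_g i j : (i < 3)%nat -> (j < 3)%nat -> LL (fun W => g_ W i j) V.
Proof. intros. apply (LL_coord (3*i+j)). unfold ncoord; lia. Qed.
Lemma LL_K i j : (i < 3)%nat -> (j < 3)%nat -> LL (fun W => K_ W i j) V.
Proof. intros. apply (LL_coord (9+3*i+j)). unfold ncoord; lia. Qed.
Lemma LL_F i j : (i < 3)%nat -> (j < 3)%nat -> LL (fun W => F_ W i j) V.
Proof. intros. apply (LL_coord (18+3*i+j)). unfold ncoord; lia. Qed.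
Lemma LL_E i : (i < 3)%nat -> LL (fun W => E_ W i) V.
Proof. intros. apply (LL_coord (27+i)). unfold ncoord; lia. Qed.
Lemma LL_u i : (i < 3)%nat -> LL (fun W => u_ W i) V.
Proof. intros. apply (LL_coord (30+i)). unfold ncoord; lia. Qed.
Lemma LL_T00 : LL (fun W => sT00 W) V.
Proof. apply (LL_coord 33). unfold ncoord; lia. Qed.
Lemma LL_T0 i : (i < 3)%nat -> LL (fun W => sT0 W i) V.
Proof. intros. apply (LL_coord (34+i)). unfold ncoord; lia. Qed.
Lemma LL_rho : LL (fun W => rho_ W) V.
Proof. apply (LL_coord 37). unfold ncoord; lia. Qed.
Lemma LL_e : LL (fun W => e_ W) V.
Proof. apply (LL_coord 38). unfold ncoord; lia. Qed.

Ltac LLstep :=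
  match goal with
  | |- LL (fun _ => ?c) _ => apply LL_const
  | |- LL (fun W => g_ W _ _) _ => apply LL_g
  | |- LL (fun W => K_ W _ _) _ => apply LL_K
  | |- LL (fun W => F_ W _ _) _ => apply LL_F
  | |- LL (fun W => E_ W _) _ => apply LL_E
  | |- LL (fun W => u_ W _) _ => apply LL_u
  | |- LL (fun W => sT00 W) _ => apply LL_T00
  | |- LL (fun W => sT0 W _) _ => apply LL_T0
  | |- LL (fun W => rho_ W) _ => apply LL_rho
  | |- LL (fun W => e_ W) _ => apply LL_e
  | |- LL (fun W => W _) _ => apply LL_coord
  | |- LL (fun W => _ + _) _ => apply LL_plus
  | |- LL (fun W => _ - _) _ => apply LL_minus
  | |- LL (fun W => - _) _ => apply LL_opp
  | |- LL (fun W => _ * _) _ => apply LL_mult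
  | |- LL (fun W => _ / _) _ => apply LL_div
  | |- LL (fun W => / _) _ => apply LL_inv
  | |- LL (fun W => _ ^ _) _ => apply LL_pow
  end.

Lemma LL_det : LL (fun W => det3 (sg W)) V.
Proof. unfold det3, cof, sum3, sg. cbv beta. repeat LLstep; unfold ncoord; apply Nat.ltb_lt; reflexivity. Qed.

Lemma LL_gi i j : (i < 3)%nat -> (j < 3)%nat -> LL (fun W => gi W i j) V.
Proof. intros Hi Hj. unfold gi, inv3. apply LL_div. 2: apply LL_det.
 2: { pose proof (det_pos _ (proj1 HD)). lra. }
 destruct i as [|[|[|]]]; try lia; destruct j as [|[|[|]]]; try lia;
 unfold cof, sg; cbv beta; repeat LLstep; unfold ncoord; apply Nat.ltb_lt; reflexivity. Qed.

Lemma Dpos : 0 < rho_ V /\ 0 < u0 V.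
Proof. split. apply HD. apply u0_pos, HD. Qed.

Ltac posit := match goal with
  | |- _ <> 0 => apply Rgt_not_eq; unfold Rgt; posit
  | |- 0 < _ * _ => apply Rmult_lt_0_compat; posit
  | |- 0 < _ ^ _ => apply pow_lt; posit
  | |- 0 < rho_ V => apply Dpos
  | |- 0 < u0 V => apply Dpos
  | |- 0 < _ => lra
  end.


Lemma LL_u0 : LL (fun W => u0 W) V.
Proof. unfold u0. apply LL_sqrt. 2: apply u0arg_pos, HD. unfold sum3. repeat LLstep; lia. Qed.

Ltac LLstep2 := match goal with
  | |- LL (fun W => gi W _ _) _ => apply LL_gi
  | |- LL (fun W => u0 W) _ => apply LL_u0
  | |- LL u0 _ => apply LL_u0
  | |- LL rho_ _ => apply LL_rho
  | |- LL e_ _ => apply LL_e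
  | |- LL sT00 _ => apply LL_T00
  | _ => LLstep end.

Ltac LLsolve := repeat LLstep2; try lia; try posit.

Lemma LL_gam l i j : (l < 3)%nat -> (i < 3)%nat -> (j < 3)%nat -> LL (fun W => gam C W l i j) V.
Proof. intros. unfold gam, sum3. LLsolve. Qed.

Ltac LLs := repeat (LLstep2 || match goal with |- LL (fun W => gam C W _ _ _) _ => apply LL_gam end); try lia; try posit.

Lemma LL_dg i j : (i < 3)%nat -> (j < 3)%nat -> LL (fun W => dg W i j) V.
Proof. intros. unfold dg. LLs. Qed.
Lemma LL_dF i j : (i < 3)%nat -> (j < 3)%nat -> LL (fun W => dF C W i j) V.
Proof. intros. unfold dF, sum3. LLs. Qed.
Lemma LL_dE i : (i < 3)%nat -> LL (fun W => dE C W i) V.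
Proof. intros. unfold dE, Hm, sum3. LLs. Qed.
Lemma LL_du i : (i < 3)%nat -> LL (fun W => du C W i) V.
Proof. intros. unfold du, Kud, sum3. LLs. Qed.
Lemma LL_dT00 : LL (fun W => dT00 C W) V.
Proof. intros. unfold dT00, Hm, sum3. LLs. Qed.
Lemma LL_dT0 i : (i < 3)%nat -> LL (fun W => dT0 C W i) V.
Proof. intros. unfold dT0, Hm, Kud, sum3. LLs. Qed.
Lemma LL_drho : LL (fun W => drho C W) V.
Proof. intros. unfold drho, Hm, sum3. LLs. Qed.
Lemma LL_de : LL (fun W => de C W) V.
Proof. intros. unfold de, Hm, sum3. LLs. Qed.
Lemma LL_Ric i j : (i < 3)%nat -> (j < 3)%nat -> LL (fun W => Ric C W i j) V.
Proof. intros. unfold Ric, sum3. LLs. Qed.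
Lemma LL_dK i j : (i < 3)%nat -> (j < 3)%nat -> LL (fun W => dK C Lam W i j) V.
Proof. intros. unfold dK, Hm, Kud, tau, Tij, T00, Th00low, ulow, sum3.
 repeat (LLstep2 || match goal with |- LL (fun W => Ric C W _ _) _ => apply LL_Ric end); try lia; try posit. Qed.
End Atoms.


Lemma LL_ext f g V : (forall W, f W = g W) -> LL f V -> LL g V.
Proof. intros E (r & L & H1 & H2 & H3). exists r, L. repeat split; auto. intros. rewrite <- !E. auto. Qed.

Lemma div3 k : (k < 9)%nat -> (k / 3 < 3)%nat.
Proof. intros. apply Nat.Div0.div_lt_upper_bound. lia. Qed.
Lemma mod3 k : (k mod 3 < 3)%nat.
Proof. apply Nat.mod_upper_bound. lia. Qed.

Lemma LL_vf C Lam V k : Dom V -> (k < ncoord)%nat -> LL (fun W => vf C Lam W k) V.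
Proof. intros HD Hk. unfold ncoord in Hk.
 destruct (Nat.ltb_spec k 9).
 { eapply LL_ext. intros W. unfold vf. rewrite (proj2 (Nat.ltb_lt k 9) H). reflexivity.
   apply LL_dg; auto. apply div3; auto. apply mod3. }
 destruct (Nat.ltb_spec k 18).
 { eapply LL_ext. intros W. unfold vf. rewrite (proj2 (Nat.ltb_lt k 18) H0), (proj2 (Nat.ltb_ge k 9) H). reflexivity.
   apply LL_dK; auto. apply div3; lia. apply mod3. }
 destruct (Nat.ltb_spec k 27).
 { eapply LL_ext. intros W. unfold vf. rewrite (proj2 (Nat.ltb_lt k 27) H1), (proj2 (Nat.ltb_ge k 18) H0), (proj2 (Nat.ltb_ge k 9) H). reflexivity.
   apply LL_dF; auto. apply div3; lia. apply mod3. }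
 destruct (Nat.ltb_spec k 30).
 { eapply LL_ext. intros W. unfold vf. rewrite (proj2 (Nat.ltb_lt k 30) H2), (proj2 (Nat.ltb_ge k 27) H1), (proj2 (Nat.ltb_ge k 18) H0), (proj2 (Nat.ltb_ge k 9) H). reflexivity.
   apply LL_dE; auto. lia. }
 destruct (Nat.ltb_spec k 33).
 { eapply LL_ext. intros W. unfold vf. rewrite (proj2 (Nat.ltb_lt k 33) H3), (proj2 (Nat.ltb_ge k 30) H2), (proj2 (Nat.ltb_ge k 27) H1), (proj2 (Nat.ltb_ge k 18) H0), (proj2 (Nat.ltb_ge k 9) H). reflexivity.
   apply LL_du; auto. lia. }
 assert (k = 33 \/ k = 34 \/ k = 35 \/ k = 36 \/ k = 37 \/ k = 38)%nat as Hc by lia.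
 destruct Hc as [ -> | [ -> | [ -> | [ -> | [ -> | -> ]]]]].
 - eapply LL_ext. intros W. reflexivity. apply LL_dT00; auto.
 - eapply LL_ext. intros W. reflexivity. apply LL_dT0; auto.
 - eapply LL_ext. intros W. reflexivity. apply LL_dT0; auto.
 - eapply LL_ext. intros W. reflexivity. apply LL_dT0; auto.
 - eapply LL_ext. intros W. reflexivity. apply LL_drho; auto.
 - eapply LL_ext. intros W. reflexivity. apply LL_de; auto.
Qed.


Definition LipSum (F : st -> nat -> R) (V : st) r L :=
  0 < r /\ 0 <= L /\ forall W W', dist1 W V < r -> dist1 W' V < r ->
    sum_f_R0 (fun k => Rabs (F W k - F W' k)) 38 <= L * dist1 W W'.

Lemma LipSum_n (F : st -> nat -> R) V n : (forall k, (k <= n)%nat -> LL (fun W => F W k) V) ->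
  exists r L, 0 < r /\ 0 <= L /\ forall W W', dist1 W V < r -> dist1 W' V < r ->
    sum_f_R0 (fun k => Rabs (F W k - F W' k)) n <= L * dist1 W W'.
Proof. induction n; intros H.
 - destruct (H 0%nat ltac:(lia)) as (r & L & Hr & HL & HH). exists r, L. repeat split; auto.
 - destruct (IHn (fun k Hk => H k ltac:(lia))) as (r1 & L1 & Hr1 & HL1 & H1).
   destruct (H (S n) ltac:(lia)) as (r2 & L2 & Hr2 & HL2 & H2).
   exists (Rmin r1 r2), (L1 + L2). split. apply Rmin_pos; auto. split. lra.
   intros W W' A1 A2. pose proof (Rmin_l r1 r2). pose proof (Rmin_r r1 r2).
   simpl. pose proof (H1 W W' ltac:(lra) ltac:(lra)). pose proof (H2 W W' ltac:(lra) ltac:(lra)). lra.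
Qed.

Lemma LipSum_vf C Lam V : Dom V -> exists r L, LipSum (vf C Lam) V r L.
Proof. intros HD. destruct (LipSum_n (vf C Lam) V 38) as (r & L & H).
 intros k Hk. apply LL_vf; auto. unfold ncoord; lia.
 exists r, L. exact H. Qed.

Lemma real_ind (P : R -> Prop) a b : a <= b ->
  (forall s, a <= s <= b -> (forall u, a <= u < s -> P u) ->
     exists eta, 0 < eta /\ forall u, a <= u < s + eta -> u <= b -> P u) ->
  forall t, a <= t <= b -> P t.
Proof. intros Hab Hs.
 set (E := fun x => a <= x <= b /\ forall u, a <= u <= x -> P u).
 assert (Pa : P a). { destruct (Hs a ltac:(lra) ltac:(intros; lra)) as (eta & He & H). apply H; lra. }
 assert (Ea : E a). { split. lra. intros u Hu. replace u with a by lra. auto. }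
 assert (Bd : bound E). { exists b. intros x [Hx _]. lra. }
 destruct (completeness E Bd (ex_intro _ a Ea)) as [m [Hub Hlub]].
 assert (am : a <= m) by (apply Hub; auto).
 assert (mb : m <= b). { apply Hlub. intros x [Hx _]. lra. }
 assert (H1 : forall u, a <= u < m -> P u).
 { intros u Hu. destruct (classic (exists x, E x /\ u < x)) as [[x [[_ Hx] Hux]]|Hn].
   - apply Hx; lra.
   - exfalso. assert (m <= u). { apply Hlub. intros x Ex. destruct (Rle_lt_dec x u); auto. exfalso; apply Hn; eauto. }
     lra. }
 destruct (Hs m ltac:(lra) H1) as (eta & He & H2).
 assert (mb' : m = b).
 { destruct (Req_dec m b); auto. exfalso.
   set (x' := Rmin b (m + eta / 2)).
   assert (x' <= b) by apply Rmin_l. assert (x' <= m + eta/2) by apply Rmin_r.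
   assert (m < x'). { unfold x'. apply Rmin_glb_lt; lra. }
   assert (E x'). { split. lra. intros u Hu. apply H2; lra. }
   pose proof (Hub x' H5). lra. }
 intros t Ht. destruct (Rlt_le_dec t b). apply H1; lra. apply H2; lra.
Qed.


Definition cont_sol (phi : R -> st) := forall k t, (k < ncoord)%nat -> 0 <= t ->
  forall eps, 0 < eps -> exists delta, 0 < delta /\
    forall s, 0 <= s -> Rabs (s - t) < delta -> Rabs (phi s k - phi t k) < eps.
Definition der_sol (F : st -> nat -> R) (phi : R -> st) := forall k t, (k < ncoord)%nat -> 0 < t ->
  derivable_pt_lim (fun s => phi s k) t (F (phi t) k).

Lemma Rmax0_dist s t : 0 <= t -> Rabs (Rmax 0 s - t) <= Rabs (s - t).
Proof. intros. unfold Rmax. destruct (Rle_dec 0 s). lra.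
 rewrite Rabs_left1 by lra. rewrite Rabs_left1 by lra. lra. Qed.

Lemma ext_cont phi k t : cont_sol phi -> (k < ncoord)%nat -> 0 <= t ->
  continuity_pt (fun s => phi (Rmax 0 s) k) t.
Proof. intros Hc Hk Ht eps He. destruct (Hc k t Hk Ht eps He) as (d & Hd & H).
 exists d. split; auto. intros x [_ Hx]. simpl. unfold R_dist in *.
 rewrite (Rmax_right 0 t Ht). apply H. apply Rmax_l.
 eapply Rle_lt_trans. apply Rmax0_dist; auto. auto. Qed.

Lemma ext_der F phi k t : der_sol F phi -> (k < ncoord)%nat -> 0 < t ->
  derivable_pt_lim (fun s => phi (Rmax 0 s) k) t (F (phi t) k).
Proof. intros Hd Hk Ht eps He. destruct (Hd k t Hk Ht eps He) as [d H].
 assert (Hp : 0 < Rmin d t) by (apply Rmin_pos; [apply cond_pos|lra]).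
 exists (mkposreal _ Hp). intros h Hh Hhd. simpl in Hhd.
 pose proof (Rmin_l d t). pose proof (Rmin_r d t).
 rewrite (Rmax_right 0 t) by lra. rewrite (Rmax_right 0 (t + h)).
 apply H; auto. lra. apply Rabs_def2 in Hhd. lra. Qed.

Lemma D_plus f g x l1 l2 : derivable_pt_lim f x l1 -> derivable_pt_lim g x l2 ->
  derivable_pt_lim (fun u => f u + g u) x (l1 + l2).
Proof. intros. apply (derivable_pt_lim_plus f g); auto. Qed.
Lemma D_minus f g x l1 l2 : derivable_pt_lim f x l1 -> derivable_pt_lim g x l2 ->
  derivable_pt_lim (fun u => f u - g u) x (l1 - l2).
Proof. intros. apply (derivable_pt_lim_minus f g); auto. Qed.
Lemma D_mult f g x l1 l2 : derivable_pt_lim f x l1 -> derivable_pt_lim g x l2 ->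
  derivable_pt_lim (fun u => f u * g u) x (l1 * g x + f x * l2).
Proof. intros. apply (derivable_pt_lim_mult f g); auto. Qed.
Lemma D_explin c a x : derivable_pt_lim (fun u => exp (c * (u - a))) x (exp (c * (x - a)) * c).
Proof. assert (H: derivable_pt_lim (fun u => c * (u - a)) x (0 * (x - a) + c * 1)).
 { apply (D_mult (fun _ => c) (fun u => u - a)). apply derivable_pt_lim_const. replace 1 with (1-0) by ring. apply (D_minus (fun u => u) (fun _ => a)). apply derivable_pt_lim_id. apply derivable_pt_lim_const. }
 replace (0*(x-a) + c*1) with c in H by ring.
 apply (derivable_pt_lim_comp (fun u => c * (u - a)) exp x c). exact H. apply derivable_pt_lim_exp. Qed.
Lemma D_sum (f : nat -> R -> R) (df : nat -> R) x n : (forall k, (k <= n)%nat -> derivable_pt_lim (f k) x (df k)) ->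
  derivable_pt_lim (fun u => sum_f_R0 (fun k => f k u) n) x (sum_f_R0 df n).
Proof. induction n; intros H; simpl. apply H; lia.
 apply D_plus. apply IHn; intros; apply H; lia. apply H; lia. Qed.

Lemma C_sum (f : nat -> R -> R) x n : (forall k, (k <= n)%nat -> continuity_pt (f k) x) ->
  continuity_pt (fun u => sum_f_R0 (fun k => f k u) n) x.
Proof. induction n; intros H; simpl. apply H; lia.
 apply (continuity_pt_plus (fun u => sum_f_R0 (fun k => f k u) n) (f (S n))). apply IHn; intros; apply H; lia. apply H; lia. Qed.

Lemma sum_const c n : sum_f_R0 (fun _ => c) n = INR (S n) * c.
Proof. induction n. simpl; ring. rewrite tech5, IHn. rewrite !S_INR. ring. Qed.

Lemma Rabs_sq x : Rabs x * Rabs x = x * x.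
Proof. rewrite <- Rabs_mult. apply Rabs_pos_eq. nra. Qed.

Lemma CS (a : nat -> R) n : (sum_f_R0 (fun k => Rabs (a k)) n)^2 <= INR (S n) * sum_f_R0 (fun k => a k * a k) n.
Proof. induction n.
 - simpl. pose proof (Rabs_sq (a 0%nat)). nra.
 - rewrite !tech5. set (S := sum_f_R0 (fun k => Rabs (a k)) n). set (Q := sum_f_R0 (fun k => a k * a k) n).
   set (b := a (Datatypes.S n)).
   assert (H2 : 2 * S * Rabs b <= Q + INR (Datatypes.S n) * (b * b)).
   { assert (A: sum_f_R0 (fun k => (2*Rabs b) * Rabs (a k)) n <= sum_f_R0 (fun k => a k * a k + b*b) n).
     { apply sum_le. intros k Hk. pose proof (Rabs_sq (a k)); pose proof (Rabs_sq b).
       pose proof (Rabs_pos (a k)); pose proof (Rabs_pos b). assert (0 <= (Rabs (a k) - Rabs b) * (Rabs (a k) - Rabs b)) by apply Rle_0_sqr. nra. }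
     rewrite sum_scal, sum_plus, sum_const in A. fold S Q in A. lra. }
   fold S Q in IHn. rewrite (S_INR (Datatypes.S n)).
   assert (Rabs b * Rabs b = b * b) by (rewrite <- Rabs_mult; apply Rabs_pos_eq; nra).
   nra.
Qed.

Lemma sq_le (a : nat -> R) n : sum_f_R0 (fun k => a k * a k) n <= (sum_f_R0 (fun k => Rabs (a k)) n)^2.
Proof. induction n.
 - simpl. pose proof (Rabs_sq (a 0%nat)). nra.
 - rewrite !tech5. pose proof (sum_nonneg (fun k => Rabs (a k)) n (fun k _ => Rabs_pos (a k))).
   pose proof (Rabs_pos (a (S n))).
   assert (Rabs (a (S n)) * Rabs (a (S n)) = a (S n) * a (S n)) by (rewrite <- Rabs_mult; apply Rabs_pos_eq; nra).
   nra. Qed.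

Definition xk (p1 p0 : R -> st) k u := p1 (Rmax 0 u) k - p0 (Rmax 0 u) k.
Definition qf (p1 p0 : R -> st) u := sum_f_R0 (fun k => xk p1 p0 k u * xk p1 p0 k u) 38.

Lemma dist1_unf W V : dist1 W V = sum_f_R0 (fun k => Rabs (W k - V k)) 38.
Proof. reflexivity. Qed.

Lemma qf_dist p1 p0 u : 0 <= u ->
  qf p1 p0 u <= dist1 (p1 u) (p0 u) ^ 2 /\ dist1 (p1 u) (p0 u) ^ 2 <= 39 * qf p1 p0 u.
Proof. intros Hu. unfold qf, xk. rewrite (Rmax_right 0 u Hu), dist1_unf. split. apply sq_le.
 pose proof (CS (fun k => p1 u k - p0 u k) 38). replace (INR 39) with 39 in H. exact H.
 simpl. ring. Qed.


Lemma xk_cont p k u : cont_sol p -> (k < ncoord)%nat -> 0 <= u ->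
  continuity_pt (fun s => p (Rmax 0 s) k) u.
Proof. intros. apply ext_cont; auto. Qed.

Lemma gronwall F p1 p0 Ws r L a t :
 cont_sol p1 -> cont_sol p0 -> der_sol F p1 -> der_sol F p0 -> LipSum F Ws r L -> 0 <= a <= t ->
 (forall u, a <= u <= t -> dist1 (p1 u) Ws < r /\ dist1 (p0 u) Ws < r) ->
 dist1 (p1 t) (p0 t) ^ 2 <= 39 * exp (78 * L * (t - a)) * dist1 (p1 a) (p0 a) ^ 2.
Proof. intros c1 c0 d1 d0 [Hr [HL Lip]] Hat Hball.
 destruct (Req_dec a t) as [<-|Hne].
 { replace (a - a) with 0 by ring. rewrite Rmult_0_r, exp_0. pose proof (pow2_ge_0 (dist1 (p1 a) (p0 a))). lra. }
 set (M := 78 * L).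
 set (h := fun u => qf p1 p0 u * exp (- M * (u - a))).
 set (df := fun u => sum_f_R0 (fun k => (F (p1 u) k - F (p0 u) k) * xk p1 p0 k u + xk p1 p0 k u * (F (p1 u) k - F (p0 u) k)) 38
        * exp (- M * (u - a)) + qf p1 p0 u * (exp (- M * (u - a)) * - M)).
 assert (Hder : forall u, 0 < u -> derivable_pt_lim h u (df u)).
 { intros u Hu. unfold h, df. apply (D_mult (qf p1 p0) (fun u => exp (- M * (u - a)))).
   2: apply D_explin. unfold qf.
   apply (D_sum (fun k u => xk p1 p0 k u * xk p1 p0 k u)). intros k Hk.
   assert (Hx : derivable_pt_lim (xk p1 p0 k) u (F (p1 u) k - F (p0 u) k)).
   { unfold xk. apply (D_minus (fun s => p1 (Rmax 0 s) k) (fun s => p0 (Rmax 0 s) k)).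
     apply ext_der; auto. unfold ncoord; lia. apply ext_der; auto. unfold ncoord; lia. }
   apply (D_mult (xk p1 p0 k) (xk p1 p0 k)); auto. }
 assert (Hcont : forall u, 0 <= u -> continuity_pt h u).
 { intros u Hu. unfold h. apply (continuity_pt_mult (qf p1 p0) (fun u => exp (- M * (u - a)))).
   - unfold qf. apply (C_sum (fun k u => xk p1 p0 k u * xk p1 p0 k u)). intros k Hk.
     assert (continuity_pt (xk p1 p0 k) u).
     { unfold xk. apply (continuity_pt_minus (fun s => p1 (Rmax 0 s) k) (fun s => p0 (Rmax 0 s) k));
       apply ext_cont; auto; unfold ncoord; lia. }
     apply (continuity_pt_mult (xk p1 p0 k) (xk p1 p0 k)); auto.
   - apply derivable_continuous_pt. exists (exp (- M * (u - a)) * - M). apply D_explin. }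
 pose proof (Coquelicot.Derive.MVT_gen h a t df) as Hm. cbv zeta in Hm.
 rewrite Rmin_left, Rmax_right in Hm by lra.
 destruct Hm as (c & Hc & Heq).
 { intros u Hu. apply Coquelicot.Derive.is_derive_Reals. apply Hder. lra. }
 { intros u Hu. apply Hcont. lra. }
 assert (Hc0 : 0 <= c) by lra.
 assert (Hdf : df c <= 0).
 { unfold df. set (e := exp (- M * (c - a))). assert (He : 0 < e) by apply exp_pos.
   set (d := dist1 (p1 c) (p0 c)).
   assert (Hx : forall k, xk p1 p0 k c = p1 c k - p0 c k) by (intros; unfold xk; rewrite Rmax_right; auto).
   assert (S1 : sum_f_R0 (fun k => (F (p1 c) k - F (p0 c) k) * xk p1 p0 k c + xk p1 p0 k c * (F (p1 c) k - F (p0 c) k)) 38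
                <= sum_f_R0 (fun k => (2 * d) * Rabs (F (p1 c) k - F (p0 c) k)) 38).
   { apply sum_le. intros k Hk. rewrite Hx.
     pose proof (dist1_coord (p1 c) (p0 c) k ltac:(unfold ncoord; lia)). fold d in H.
     set (y := F (p1 c) k - F (p0 c) k). set (x := p1 c k - p0 c k).
     assert (y * x <= Rabs y * Rabs x) by (rewrite <- Rabs_mult; apply Rle_abs).
     pose proof (Rabs_pos y). pose proof (Rabs_pos x).
     assert (Rabs y * Rabs x <= Rabs y * d) by (apply Rmult_le_compat_l; auto). nra. }
   rewrite sum_scal in S1.
   destruct (Hball c Hc) as [B1 B0].
   pose proof (Lip (p1 c) (p0 c) B1 B0) as HLip. fold d in HLip.
   assert (Hd : 0 <= d) by apply dist1_nonneg.
   destruct (qf_dist p1 p0 c Hc0) as [_ Q2]. fold d in Q2.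
   assert (2 * d * sum_f_R0 (fun k => Rabs (F (p1 c) k - F (p0 c) k)) 38 <= 2 * d * (L * d)) by
     (apply Rmult_le_compat_l; lra).
   assert (L * (d ^ 2) <= L * (39 * qf p1 p0 c)) by (apply Rmult_le_compat_l; lra).
   unfold M. nra. }
 assert (Ht : h t <= h a). { assert (df c * (t - a) <= 0). { assert (0 <= t - a) by lra. nra. } lra. }
 unfold h in Ht. replace (a - a) with 0 in Ht by ring. rewrite Rmult_0_r, exp_0, Rmult_1_r in Ht.
 destruct (qf_dist p1 p0 t ltac:(lra)) as [_ Qt]. destruct (qf_dist p1 p0 a ltac:(lra)) as [Qa _].
 assert (E1 : qf p1 p0 t <= qf p1 p0 a * exp (M * (t - a))).
 { assert (exp (- M * (t - a)) * exp (M * (t - a)) = 1).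
   { rewrite <- exp_plus. replace (- M * (t - a) + M * (t - a)) with 0 by ring. apply exp_0. }
   pose proof (exp_pos (M * (t - a))).
   apply Rmult_le_compat_r with (r := exp (M * (t - a))) in Ht. 2: lra.
   rewrite Rmult_assoc, H, Rmult_1_r in Ht. exact Ht. }
 fold M. pose proof (exp_pos (M * (t - a))).
 assert (qf p1 p0 a * exp (M * (t - a)) <= dist1 (p1 a) (p0 a) ^ 2 * exp (M * (t - a))) by
   (apply Rmult_le_compat_r; lra).
 nra.
Qed.


Lemma cont_dist_n p s n : cont_sol p -> 0 <= s -> (n < ncoord)%nat -> forall eps, 0 < eps -> exists delta, 0 < delta /\
  forall u, 0 <= u -> Rabs (u - s) < delta -> sum_f_R0 (fun k => Rabs (p u k - p s k)) n < eps.
Proof. intros Hc Hs. induction n; intros Hn eps He.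
 - destruct (Hc 0%nat s Hn Hs eps He) as (d & Hd & H). exists d; split; auto.
 - destruct (IHn ltac:(lia) (eps/2) ltac:(lra)) as (d1 & Hd1 & H1).
   destruct (Hc (S n) s Hn Hs (eps/2) ltac:(lra)) as (d2 & Hd2 & H2).
   exists (Rmin d1 d2). split. apply Rmin_pos; auto. intros u Hu Hud.
   pose proof (Rmin_l d1 d2). pose proof (Rmin_r d1 d2). simpl.
   pose proof (H1 u Hu ltac:(lra)). pose proof (H2 u Hu ltac:(lra)). lra. Qed.

Lemma cont_dist p s : cont_sol p -> 0 <= s -> forall eps, 0 < eps -> exists delta, 0 < delta /\
  forall u, 0 <= u -> Rabs (u - s) < delta -> dist1 (p u) (p s) < eps.
Proof. intros. apply (cont_dist_n p s 38); auto. Qed.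

Lemma sq_lt x y : 0 <= x -> 0 < y -> x ^ 2 < y ^ 2 -> x < y.
Proof. intros. nra. Qed.

Lemma exp_mono x y : x <= y -> exp x <= exp y.
Proof. intros H. destruct (Rle_lt_or_eq_dec x y H). apply Rlt_le, exp_increasing; auto. subst; lra. Qed.

Lemma local_est F p1 p0 Ws r L a b :
 cont_sol p1 -> cont_sol p0 -> der_sol F p1 -> der_sol F p0 -> LipSum F Ws r L -> 0 <= a <= b ->
 (forall u, a <= u <= b -> dist1 (p0 u) Ws < r/4) ->
 39 * exp (78*L*(b-a)) * dist1 (p1 a) (p0 a)^2 < (r/2)^2 ->
 forall t, a <= t <= b -> dist1 (p1 t) (p0 t)^2 <= 39 * exp (78*L*(t-a)) * dist1 (p1 a) (p0 a)^2.
Proof. intros c1 c0 d1 d0 HLip Hab Hp0 Hsmall.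
 pose proof HLip as [Hr [HL Lip]].
 set (P := fun t => dist1 (p1 t) (p0 t)^2 <= 39 * exp (78*L*(t-a)) * dist1 (p1 a) (p0 a)^2).
 assert (Pa : P a). { unfold P. replace (a - a) with 0 by ring. rewrite Rmult_0_r, exp_0. pose proof (pow2_ge_0 (dist1 (p1 a) (p0 a))). lra. }
 assert (Pin : forall t, a <= t <= b -> P t -> dist1 (p1 t) Ws < 3 * r / 4).
 { intros t Ht Pt. unfold P in Pt.
   assert (exp (78*L*(t-a)) <= exp (78*L*(b-a))).
   { apply exp_mono. apply Rmult_le_compat_l. lra. lra. }
   pose proof (pow2_ge_0 (dist1 (p1 a) (p0 a))).
   assert (dist1 (p1 t) (p0 t)^2 < (r/2)^2) by nra.
   assert (dist1 (p1 t) (p0 t) < r/2) by (apply sq_lt; [apply dist1_nonneg|lra|auto]).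
   pose proof (dist1_tri (p1 t) (p0 t) Ws). pose proof (Hp0 t Ht). lra. }
 apply (real_ind P a b ltac:(lra)).
 intros s Hs IH.
 destruct (cont_dist p1 s c1 ltac:(lra) (r/8) ltac:(lra)) as (eta & Heta & Hcs).
 set (tau := Rmax a (s - eta/2)).
 assert (Htau : a <= tau <= s). { split. apply Rmax_l. unfold tau, Rmax. destruct (Rle_dec a (s - eta/2)); lra. }
 assert (Ptau : P tau). { destruct (Rlt_le_dec tau s). apply IH; lra.
   assert (tau = a). { unfold tau, Rmax in *. destruct (Rle_dec a (s - eta/2)); lra. }
   rewrite H; auto. }
 assert (Dtau : dist1 (p1 tau) Ws < 3 * r / 4) by (apply Pin; auto; lra).
 assert (Dts : dist1 (p1 tau) (p1 s) < r/8).
 { apply Hcs. lra. unfold tau, Rmax. destruct (Rle_dec a (s - eta/2)); rewrite Rabs_left1; lra. }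
 assert (Ball : forall u, a <= u < s + eta -> u <= b -> dist1 (p1 u) Ws < r).
 { intros u Hu Hub. destruct (Rlt_le_dec u s).
   - pose proof (Pin u ltac:(lra) (IH u ltac:(lra))). lra.
   - assert (dist1 (p1 u) (p1 s) < r/8). { apply Hcs. lra. rewrite Rabs_pos_eq; lra. }
     pose proof (dist1_tri (p1 u) (p1 s) Ws). pose proof (dist1_tri (p1 s) (p1 tau) Ws).
     rewrite (dist1_sym (p1 s) (p1 tau)) in H1. lra. }
 exists eta. split; auto. intros u Hu Hub. unfold P.
 apply (gronwall F p1 p0 Ws r L a u c1 c0 d1 d0 HLip). lra.
 intros v Hv. split. apply Ball; lra. pose proof (Hp0 v ltac:(lra)). lra.
Qed.


Theorem theorem8p1 (C : StructConst) (Lam : R)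
  (HC : bianchi_I_to_VIII C) (HLam : 0 < Lam)
  (S : st -> R -> st)
  (HS : forall V0, admissible C Lam V0 -> global_solution C Lam (S V0) V0) :
  forall V0, admissible C Lam V0 ->
  forall T, 0 < T -> forall eps, 0 < eps ->
  exists delta, 0 < delta /\
    forall V1, admissible C Lam V1 -> dist1 V1 V0 < delta ->
    forall t, 0 <= t <= T -> dist1 (S V1 t) (S V0 t) < eps.
Proof.
 intros V0 HV0 T HT.
 destruct (HS V0 HV0) as (I0 & Dm0 & C0 & D0).
 set (Q := fun tau => forall eps, 0 < eps -> exists delta, 0 < delta /\
    forall V1, admissible C Lam V1 -> dist1 V1 V0 < delta ->
    forall t, 0 <= t <= tau -> dist1 (S V1 t) (S V0 t) < eps).
 assert (Q0 : Q 0).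
 { intros eps He. exists eps. split; auto. intros V1 HV1 Hd t Ht.
   replace t with 0 by lra. destruct (HS V1 HV1) as (I1 & _).
   rewrite (dist1_ext (S V1 0) V1 (S V0 0) V0); auto. }
 enough (QT : Q T) by exact QT.
 apply (real_ind Q 0 T ltac:(lra)); [|lra].
 intros s Hs IH.
 destruct (Dm0 s ltac:(lra)) as [Pd Rh].
 destruct (LipSum_vf C Lam (S V0 s) (conj Pd Rh)) as (r & L & HLip).
 pose proof HLip as [Hr [HL _]].
 destruct (cont_dist (S V0) s C0 ltac:(lra) (r/4) ltac:(lra)) as (eta0 & He0 & Hc0).
 set (eta := eta0 / 2).
 set (tau0 := Rmax 0 (s - eta)).
 assert (Ht0 : 0 <= tau0 <= s). { split. apply Rmax_l. unfold tau0, Rmax. destruct (Rle_dec 0 (s - eta)); unfold eta; lra. }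
 assert (Qt0 : Q tau0). { destruct (Rlt_le_dec tau0 s). apply IH; lra.
   assert (tau0 = 0). { unfold tau0, Rmax in *. destruct (Rle_dec 0 (s - eta)); unfold eta in *; lra. }
   rewrite H; auto. }
 exists eta. split. unfold eta; lra. intros u Hu _ eps He.
 set (b := s + eta).
 set (G := 39 * exp (78 * L * (b - tau0))).
 assert (HG : 0 < G) by (unfold G; pose proof (exp_pos (78 * L * (b - tau0))); lra).
 set (m := Rmin eps (r/2)).
 assert (Hm : 0 < m) by (apply Rmin_pos; lra).
 set (g := sqrt G). assert (Hg : 0 <= g) by apply sqrt_pos.
 assert (Gg : G = g * g) by (unfold g; rewrite sqrt_sqrt; lra).
 set (eps' := m / (g + 1)).
 assert (He' : 0 < eps') by (apply Rdiv_lt_0_compat; lra).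
 assert (Eeps : eps' * (g + 1) = m) by (unfold eps'; field; lra).
 assert (Hle : eps' <= eps). { pose proof (Rmin_l eps (r/2)). fold m in H. nra. }
 assert (Gsmall : G * eps' ^ 2 < m ^ 2). { rewrite Gg. nra. }
 destruct (Qt0 eps' He') as (delta & Hd & Hdel).
 exists delta. split; auto. intros V1 HV1 Hd1 t Ht.
 destruct (Rle_lt_dec t tau0).
 { pose proof (Hdel V1 HV1 Hd1 t ltac:(lra)). lra. }
 destruct (HS V1 HV1) as (I1 & Dm1 & C1 & D1).
 pose proof (Hdel V1 HV1 Hd1 tau0 ltac:(lra)) as Da.
 pose proof (dist1_nonneg (S V1 tau0) (S V0 tau0)) as Da0.
 assert (Hsm : 39 * exp (78 * L * (b - tau0)) * dist1 (S V1 tau0) (S V0 tau0) ^ 2 < (r/2)^2).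
 { fold G. pose proof (Rmin_r eps (r/2)). fold m in H.
   assert (dist1 (S V1 tau0) (S V0 tau0) ^ 2 <= eps' ^ 2) by (apply pow_incr; lra).
   assert (G * dist1 (S V1 tau0) (S V0 tau0) ^ 2 <= G * eps' ^ 2) by (apply Rmult_le_compat_l; lra).
   assert (m ^ 2 <= (r/2)^2) by (apply pow_incr; lra). lra. }
 assert (Hb0 : forall v, tau0 <= v <= b -> dist1 (S V0 v) (S V0 s) < r/4).
 { intros v Hv. apply Hc0. lra. unfold b, tau0, Rmax, eta in *. destruct (Rle_dec 0 (s - eta0/2)); apply Rabs_def1; lra. }
 pose proof (local_est (vf C Lam) (S V1) (S V0) (S V0 s) r L tau0 b C1 C0 D1 D0 HLip
   ltac:(unfold b, eta; lra) Hb0 Hsm t ltac:(unfold b in *; lra)) as Est.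
 assert (exp (78 * L * (t - tau0)) <= exp (78 * L * (b - tau0))).
 { apply exp_mono. apply Rmult_le_compat_l. lra. unfold b in *; lra. }
 assert (dist1 (S V1 t) (S V0 t) ^ 2 < eps ^ 2).
 { pose proof (pow2_ge_0 (dist1 (S V1 tau0) (S V0 tau0))).
   assert (dist1 (S V1 tau0) (S V0 tau0) ^ 2 <= eps' ^ 2) by (apply pow_incr; lra).
   pose proof (Rmin_l eps (r/2)) as H3. fold m in H3.
   assert (m ^ 2 <= eps^2) by (apply pow_incr; lra).
   fold G in Hsm. unfold G in *. nra. }
 apply sq_lt; auto. apply dist1_nonneg.
Qed.
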